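(* Let $q \in (0,1)$ and $p = 1-q$. For any $x \in \{0,1\}^n$, any $l \ge 1$, any $w \in \{0,1\}^l$, and any $z_0,\dots,z_{l-1} \in \mathbb{C}$, if $U$ denotes a random trace of $x$ with deletion probability $q$, then $$\mathbb{E}_x\left[p^{-1} \sum_{j_0 < \dots < j_{l-1}} \left(\prod_{i=0}^{l-1} 1_{U_{j_i} = w_i}\right)\left(\frac{z_0-q}{p}\right)^{j_0}\left(\prod_{i=1}^{l-1} \left(\frac{z_i-q}{p}\right)^{j_i-j_{i-1}-1}\right)\right] = \sum_{k_0 < \dots < k_{l-1}} \left(\prod_{i=0}^{l-1} 1_{x_{k_i}=w_i}\right) z_0^{k_0}\left(\prod_{i=1}^{l-1} z_i^{k_i-k_{i-1}-1}\right),$$ where the sums run over strictly increasing tuples of indices in $\{0,\dots,n-1\}$.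
   Context: A trace of $x \in \{0,1\}^n$ is obtained by deleting each bit of $x$ independently with probability $q$ and concatenating the remaining bits in order. Strings are indexed starting at $0$. For a trace $U$ and an index $j$ not less than the length of $U$, $U_j$ is defined to be $2$, so that the events $U_j = 0$ and $U_j = 1$ are both false. $\mathbb{E}_x$ denotes expectation over the random trace $U$ of $x$. The convention $0^0 = 1$ is used. *)

(* Defs.v *)
From mathcomp Require Import all_boot all_order all_algebra.
Set Implicit Arguments. Unset Strict Implicit. Unset Printing Implicit Defensive.
Import Order.TTheory GRing.Theory Num.Theory.
Local Open Scope ring_scope.

(* A deletion pattern m : {ffun 'I_n -> bool}; m i = true means bit i is kept.
   The trace of x under m: the kept bits, in order. *)
Definition trace (n : nat) (x : n.-tuple bool) (m : {ffun 'I_n -> bool}) : seq bool :=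
  [seq tnth x i | i <- enum 'I_n & m i].

(* U_j as a value in {0,1,2}: 2 when j >= |U|. *)
Definition trace_at (U : seq bool) (j : nat) : nat :=
  if (j < size U)%N then nat_of_bool (nth false U j) else 2%N.

Definition trace_prob (C : nzRingType) (n : nat) (q : C) (m : {ffun 'I_n -> bool}) : C :=
  (1 - q) ^+ #|[pred i | m i]| * q ^+ #|[pred i | ~~ m i]|.

Definition trace_expect (C : nzRingType) (n : nat) (q : C) (x : n.-tuple bool)
    (f : seq bool -> C) : C :=
  \sum_(m : {ffun 'I_n -> bool}) trace_prob q m * f (trace x m).

Definition increasing (l n : nat) (j : {ffun 'I_l -> 'I_n}) : bool :=
  [forall i1 : 'I_l, forall i2 : 'I_l, (i1 < i2)%N ==> (j i1 < j i2)%N].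

Definition gap (l n : nat) (j : {ffun 'I_l -> 'I_n}) (i : 'I_l) : nat :=
  let s := [seq val (j k) | k <- enum 'I_l] in
  if val i == 0%N then val (j i) else (val (j i) - nth 0%N s (val i).-1 - 1)%N.

Definition pattern_weight (C : nzRingType) (l n : nat) (z : 'I_l -> C)
    (j : {ffun 'I_l -> 'I_n}) : C :=
  \prod_(i < l) z i ^+ gap j i.

(* Main.v *)
Require Import Defs.
From mathcomp Require Import all_boot all_order all_algebra.
From mathcomp Require Import ring.
Import Order.TTheory GRing.Theory Num.Theory.
Local Open Scope ring_scope.

Fixpoint Ex (C : nzRingType) (q : C) (s : seq bool) (f : seq bool -> C) : C :=
  match s with
  | [::] => f [::]
  | a :: s' => (1 - q) * Ex C q s' (fun U => f (a :: U)) + q * Ex C q s' f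
  end.

Arguments Ex {C}.
Definition consf n (bm : bool * {ffun 'I_n -> bool}) : {ffun 'I_n.+1 -> bool} :=
  [ffun i => if unlift ord0 i is Some k then bm.2 k else bm.1].
Definition unconsf n (m : {ffun 'I_n.+1 -> bool}) : bool * {ffun 'I_n -> bool} :=
  (m ord0, [ffun k => m (lift ord0 k)]).
Arguments consf {n}. Arguments unconsf {n}.

Lemma consf_bij n : bijective (@consf n).
Proof.
exists (@unconsf n).
- case=> b m; rewrite /unconsf /consf /= ffunE unlift_none; congr (_, _).
  by apply/ffunP=> k; rewrite !ffunE liftK.
- move=> m; apply/ffunP=> i; rewrite /unconsf /consf ffunE /=.
  by case: unliftP => [j ->|->]; rewrite ?ffunE.
Qed.

Lemma sum_masks (C : nzRingType) (q : C) n (h : 'I_n -> bool) (f : seq bool -> C) :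
  \sum_(m : {ffun 'I_n -> bool})
     (\prod_(i < n) (if m i then 1 - q else q)) * f [seq h i | i <- enum 'I_n & m i]
  = Ex q [seq h i | i <- enum 'I_n] f.
Proof.
elim: n h f => [|n IH] h f.
  rewrite enum_ord0 /=.
  under eq_bigr do rewrite big_ord0 mul1r.
  by rewrite sumr_const card_ffun !card_ord expn0 mulr1n.
rewrite (reindex (@consf n)); last by apply: onW_bij; apply: consf_bij.
rewrite -(pair_big xpredT xpredT (fun (b : bool) (m : {ffun 'I_n -> bool}) => 
   (\prod_(i < n.+1) (if consf (b, m) i then 1 - q else q)) *
   f [seq h i | i <- enum 'I_n.+1 & consf (b, m) i])) /=.
rewrite big_bool enum_ordSl /=.
have E : forall b (m : {ffun 'I_n -> bool}) (i : 'I_n), consf (b, m) (lift ord0 i) = m i.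
  by move=> b m i; rewrite /consf ffunE liftK.
have E0 : forall b (m : {ffun 'I_n -> bool}), consf (b, m) ord0 = b.
  by move=> b m; rewrite /consf ffunE unlift_none.
simpl. rewrite -map_comp.
have Es : forall b (m : {ffun 'I_n -> bool}), [seq ([eta h] \o lift ord0) i
      | i <- enum 'I_n & preim (lift ord0) [eta consf (b, m)] i] = 
      [seq h (lift ord0 i) | i <- enum 'I_n & m i].
  by move=> b m; congr map; apply: eq_filter => i /=; rewrite E.
rewrite -!(IH (fun i => h (lift ord0 i))) !mulr_sumr.
congr (_ + _); apply: eq_bigr => m _;
  rewrite big_ord_recl E0 filter_map /= -map_comp;
  under eq_bigr do rewrite E;
  by rewrite -mulrA Es.
Qed.

Lemma trace_expectE (C : comNzRingType) (q : C) n (x : n.-tuple bool) f :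
  trace_expect q x f = Ex q x f.
Proof.
rewrite /trace_expect -[in RHS](map_tnth_enum x) -sum_masks.
apply: eq_bigr => m _; congr (_ * _).
rewrite /trace_prob (bigID (fun i => m i)) /=.
rewrite (eq_bigr (fun _ => 1 - q)); last by move=> i ->.
rewrite [X in _ = _ * X](eq_bigr (fun _ => q)); last by move=> i /negbTE ->.
by rewrite !prodr_const.
Qed.


Fixpoint R (C : nzRingType) (s ws : seq bool) (ys : seq C) : C :=
  match ws with
  | [::] => 1
  | w0 :: ws' => match s with
     | [::] => 0
     | a :: s' => head 0 ys * R C s' ws ys + (a == w0)%:R * R C s' ws' (behead ys)
     end
  end.
Arguments R {C}.

Lemma R_nil (C : nzRingType) s (ys : seq C) : R s [::] ys = 1.
Proof. by case: s. Qed.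

Lemma Ex_ext (C : nzRingType) (q : C) s f g :
  (forall U, f U = g U) -> Ex q s f = Ex q s g.
Proof.
elim: s f g => [|a s IH] f g H /=; first exact: H.
by congr (_ * _ + _ * _); apply: IH => U; apply: H.
Qed.

Lemma Ex_const (C : nzRingType) (q : C) s c : Ex q s (fun _ => c) = c.
Proof.
elim: s c => [|a s IH] c //=; rewrite !IH; by rewrite -mulrDl subrK mul1r.
Qed.

Lemma Ex_lin (C : comNzRingType) (q : C) s c1 c2 f g :
  Ex q s (fun U => c1 * f U + c2 * g U) = c1 * Ex q s f + c2 * Ex q s g.
Proof.
elim: s f g => [|a s IH] f g //=.
rewrite (IH (fun U => f (a :: U)) (fun U => g (a :: U))) IH.
rewrite !mulrDr !mulrA ![(1 - q) * _]mulrC ![q * _]mulrC.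
by rewrite -!mulrA addrACA.
Qed.

Lemma Ex_R (C : fieldType) (q : C) (s ws : seq bool) (zs : seq C) :
  1 - q != 0 -> (size ws <= size zs)%N ->
  Ex q s (fun U => R U ws [seq (z - q) / (1 - q) | z <- zs]) = (1 - q) ^+ size ws * R s ws zs.
Proof.
move=> p0; elim: s ws zs => [|a s IH] ws zs.
  by case: ws => [|w ws] //= _; rewrite ?expr0 ?mulr1 ?mulr0.
case: ws => [|w0 ws] /=.
  move=> _; rewrite (@Ex_ext _ _ _ _ (fun _ => 1)) ?Ex_const; last by case.
  by rewrite expr0 !mulr1 subrK.
case: zs => [|z0 zs] //= Hs.
rewrite Ex_lin (IH (w0 :: ws) (z0 :: zs)) // IH //=.
set P := (1 - q).
set A := R s (w0 :: ws) (z0 :: zs).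
set B := R s ws zs.
rewrite exprS.
have -> : (z0 - q) / P = (z0 - q) * P^-1 by [].
rewrite !mulrDr !mulrA.
rewrite /P /A /B; field; exact: p0.
Qed.


Fixpoint incs (b m l : nat) {struct m} : seq (seq nat) :=
  match m with
  | 0 => if l is 0 then [:: [::]] else [::]
  | m'.+1 => if l is l'.+1 then [seq b :: K | K <- incs b.+1 m' l'] ++ incs b.+1 m' l
             else [:: [::]]
  end.

Lemma mem_incs b m l K :
  (K \in incs b m l) =
  [&& size K == l, pairwise ltn K, all (leq b) K & all (fun k => k < b + m)%N K].
Proof.
elim: m b l K => [|m IH] b l K.
  case: l => [|l]; case: K => [|k K] //=; rewrite ?in_cons ?in_nil //=.
  by rewrite addn0 [(k < b)%N]ltnNge; case: (b <= k)%N; rewrite ?andbF.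
case: l => [|l]; first by case: K => [|k K]; rewrite /= ?in_cons ?in_nil //=.
case: K => [|k K].
  rewrite /= mem_cat; apply/negbTE; rewrite negb_or; apply/andP; split.
    by apply/mapP => -[].
  by rewrite IH.
rewrite /= mem_cat (IH b.+1 l.+1) /= addSnnS eqSS.
have h1 : all (ltn b) K -> all (leq b) K by move/allP=> h; apply/allP=> x /h /ltnW.
have h2 : all (ltn k) K -> (b <= k)%N -> all (ltn b) K.
  by move=> /allP h bk; apply/allP=> x /h; apply: leq_ltn_trans.
case: (eqVneq k b) => [->|ne].
  rewrite (mem_map (fun K1 K2 (e : b :: K1 = b :: K2) => (congr1 behead e : K1 = K2))) IH ltnn /= leqnn /=.
  rewrite !andbF orbF !addSn !addnS ltnS leq_addr /=.
  have e : all (ltn b) K = all (leq b.+1) K by [].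
  rewrite e in h1 *.
  case: (all (leq b.+1) K) h1 => [/(_ isT) -> | _]; rewrite /= ?andbF //.
have -> : (k :: K \in [seq b :: K0 | K0 <- incs b.+1 m l]) = false.
  by apply/negbTE/mapP => -[K0 _ [e _]]; rewrite e eqxx in ne.
rewrite /=.
have e : all (ltn b) K = all (leq b.+1) K by [].
rewrite e in h1 h2.
have -> : (b < k)%N = (b <= k)%N by rewrite ltn_neqAle eq_sym ne.
case: (all (ltn k) K) h2; last by rewrite /= !andbF.
case: (b <= k)%N; last by rewrite /= !andbF.
by move=> /(_ isT isT) h; rewrite h h1.
Qed.

Lemma uniq_incs b m l : uniq (incs b m l).
Proof.
elim: m b l => [|m IH] b [|l] //=.
rewrite cat_uniq IH andbT (map_inj_uniq (fun K1 K2 (e : b :: K1 = b :: K2) => (congr1 behead e : K1 = K2))) IH /=.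
apply/hasPn => K HK; apply/mapP => -[K0 _ eK]; subst K.
by move: HK; rewrite mem_incs /= ltnn !andbF.
Qed.

Fixpoint Phi (C : nzRingType) (s : seq bool) (b : nat) (K : seq nat) (ws : seq bool) (ys : seq C) : C :=
  match K with
  | [::] => 1
  | k :: K' => (trace_at s k == nat_of_bool (head false ws))%:R * head 0 ys ^+ (k - b)
               * Phi C s k.+1 K' (behead ws) (behead ys)
  end.
Arguments Phi {C}.

Lemma nat_of_bool_eq (a c : bool) : (nat_of_bool a == nat_of_bool c) = (a == c).
Proof. by case: a; case: c. Qed.

Lemma R_cons (C : nzRingType) a s w0 ws (ys : seq C) :
  R (a :: s) (w0 :: ws) ys = head 0 ys * R s (w0 :: ws) ys + (a == w0)%:R * R s ws (behead ys).
Proof. by []. Qed.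

Lemma core (C : comNzRingType) (s : seq bool) m b L ws (ys : seq C) :
  (size s <= b + m)%N -> size ws = L ->
  \sum_(K <- incs b m L) Phi s b K ws ys = R (drop b s) ws ys.
Proof.
elim: m b L ws ys => [|m IH] b L ws ys Hs.
  rewrite addn0 in Hs; rewrite drop_oversize //.
  case: L => [|L] /=.
    by move/size0nil ->; rewrite big_seq1.
  by case: ws => // w ws _; rewrite big_nil.
case: L => [|L].
  by move/size0nil ->; rewrite /= big_seq1 R_nil.
case: ws => [|w0 ws] //= [Hw].
rewrite big_cat big_map /= subnn expr0 mulr1 -mulr_sumr (IH _ _ _ _ _ Hw); last by rewrite addSnnS.
rewrite (eq_big_seq (fun K => head 0 ys * Phi s b.+1 K (w0 :: ws) ys)); last first.
  move=> [|k K]; rewrite mem_incs //= => /and4P [_ _ /andP [bk _] _].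
  by rewrite (mulrC (head 0 ys)) [RHS]mulrAC -(mulrA _ _ (head 0 ys)) -exprSr subnSK.
rewrite -big_distrr /= IH /=; last by rewrite Hw.
  2: by rewrite addSnnS.
case: (ltnP b (size s)) => hb.
  rewrite (drop_nth false hb) R_cons /trace_at hb nat_of_bool_eq.
  by rewrite addrC.
rewrite !drop_oversize ?(leq_trans hb) //= /trace_at ltnNge hb /=.
by case: w0; rewrite /= mul0r mulr0 addr0.
Qed.


Lemma Phi_prod (C : comNzRingType) s K b ws (ys : seq C) L : size K = L ->
  \prod_(i < L) ((trace_at s (nth 0%N K i) == nat_of_bool (nth false ws i))%:R *
     nth 0 ys i ^+ (nth 0%N K i - (if val i == 0%N then b else (nth 0%N K i.-1).+1)))
  = Phi s b K ws ys.
Proof.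
elim: K b ws ys L => [|k K IH] b ws ys [|L] //=; first by rewrite big_ord0.
move=> [HL].
rewrite big_ord_recl /= !nth0 -(IH k.+1 (behead ws) (behead ys) L HL).
congr (_ * _); apply: eq_bigr => i _ /=.
rewrite !nth_behead.
by case: i => [[|i] Hi].
Qed.

Definition gseq l n (j : {ffun 'I_l -> 'I_n}) : seq nat := [seq val (j k) | k <- enum 'I_l].
Arguments gseq {l n}.

Lemma size_gseq l n j : size (@gseq l n j) = l.
Proof. by rewrite /gseq size_map size_enum_ord. Qed.

Lemma nth_gseq l n j (i : 'I_l) : nth 0%N (@gseq l n j) i = j i.
Proof. by rewrite /gseq (nth_map i) ?size_enum_ord // nth_ord_enum. Qed.

Arguments nth_gseq {l n}. Arguments size_gseq {l n}.

Lemma gseq_inj l n : injective (@gseq l n).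
Proof.
move=> j1 j2 e; apply/ffunP => i; apply: val_inj => /=.
by move: (nth_gseq j1 i); rewrite e nth_gseq => ->.
Qed.

Lemma bridge (C : nzRingType) l n (F : seq nat -> C) :
  \sum_(j : {ffun 'I_l -> 'I_n} | increasing j) F (gseq j) = \sum_(K <- incs 0 n l) F K.
Proof.
rewrite -big_filter -(big_map (@gseq l n) xpredT F).
apply: perm_big; apply: uniq_perm.
- rewrite map_inj_uniq ?filter_uniq ?index_enum_uniq //; exact: gseq_inj.
- exact: uniq_incs.
move=> K; rewrite mem_incs add0n; apply/idP/idP.
  case/mapP => j; rewrite mem_filter => /andP [inc _] ->.
  rewrite size_gseq eqxx /=.
  apply/and3P; split.
  - apply/(pairwiseP 0%N) => a c; rewrite !inE size_gseq => ha hc ac.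
    have -> : a = Ordinal ha by []. have -> : c = Ordinal hc by [].
    rewrite !nth_gseq.
    by move/forallP: inc => /(_ (Ordinal ha)) /forallP /(_ (Ordinal hc)) /implyP h; exact: h ac.
  - by apply/allP => k _.
  - apply/allP => k; rewrite /gseq => /mapP [i _ ->]; exact: ltn_ord.
move/and4P => [/eqP sK pw _ /allP lt].
have H : forall i : 'I_l, (nth 0%N K i < n)%N.
  move=> i; apply: lt; apply: mem_nth; by rewrite sK.
pose j := [ffun i : 'I_l => Ordinal (H i)].
have gj : gseq j = K.
  apply: (eq_from_nth (x0 := 0%N)); first by rewrite size_gseq sK.
  move=> i; rewrite size_gseq => hi.
  by rewrite (nth_gseq j (Ordinal hi)) ffunE.
apply/mapP; exists j => //.
rewrite mem_filter mem_index_enum andbT.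
apply/forallP => a; apply/forallP => c; apply/implyP => ac.
rewrite !ffunE /=.
move/(pairwiseP 0%N): pw; apply; rewrite ?inE ?sK //.
Qed.


Lemma Ex_scale (C : comNzRingType) (q : C) s c f :
  Ex q s (fun U => c * f U) = c * Ex q s f.
Proof.
elim: s f => [|a s IH] f //=.
by rewrite (IH (fun U => f (a :: U))) IH mulrDr mulrCA [q * (c * _)]mulrCA.
Qed.

Lemma summand_Phi (C : comNzRingType) U l n (ws : l.-tuple bool) (y : 'I_l -> C)
   (j : {ffun 'I_l -> 'I_n}) :
  (\prod_(i < l) (trace_at U (j i) == nat_of_bool (tnth ws i))%:R) * pattern_weight y j
  = Phi U 0 (gseq j) ws [seq y i | i <- enum 'I_l].
Proof.
rewrite /pattern_weight -big_split /= -(@Phi_prod _ U (gseq j) 0 ws _ l (size_gseq j)).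
apply: eq_bigr => i _.
rewrite nth_gseq (tnth_nth false) (nth_map i) ?size_enum_ord // nth_ord_enum /gap.
congr (_ * _); congr (_ ^+ _).
case: (\val i == 0%N); first by rewrite subn0.
by rewrite -[in RHS]addn1 subnDA.
Qed.

Lemma sum_Phi (C : comNzRingType) U l n (ws : l.-tuple bool) (y : 'I_l -> C) :
  (size U <= n)%N ->
  \sum_(j : {ffun 'I_l -> 'I_n} | increasing j)
     (\prod_(i < l) (trace_at U (j i) == nat_of_bool (tnth ws i))%:R) * pattern_weight y j
  = R U ws [seq y i | i <- enum 'I_l].
Proof.
move=> hU.
rewrite (eq_bigr (fun j => Phi U 0 (gseq j) ws [seq y i | i <- enum 'I_l])); last first.
  by move=> j _; apply: summand_Phi.
rewrite (@bridge _ l n (fun K => Phi U 0 K ws [seq y i | i <- enum 'I_l])).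
by rewrite (@core _ U n 0 l ws _ hU) ?drop0 // size_tuple.
Qed.

Lemma size_trace n (x : n.-tuple bool) m : (size (trace x m) <= n)%N.
Proof.
rewrite /trace size_map size_filter.
by apply: leq_trans (count_size _ _) _; rewrite size_enum_ord.
Qed.

Theorem proposition2 (C : numClosedFieldType) (q : C) (n l : nat)
    (x : n.-tuple bool) (w : l.-tuple bool) (z : 'I_l -> C) :
  0 < q < 1 -> (1 <= l)%N ->
  let p := 1 - q in
  trace_expect q x (fun U =>
     p ^- l *
     \sum_(j : {ffun 'I_l -> 'I_n} | increasing j)
        (\prod_(i < l) (trace_at U (j i) == nat_of_bool (tnth w i))%:R) *
        pattern_weight (fun i => (z i - q) / p) j)
  = \sum_(j : {ffun 'I_l -> 'I_n} | increasing j)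
        (\prod_(i < l) (tnth x (j i) == tnth w i)%:R) * pattern_weight z j.
Proof.
move=> /andP [q0 q1] l1 p.
have p0 : p != 0 by rewrite /p subr_eq0 eq_sym (lt_eqF q1).
set zs := [seq z i | i <- enum 'I_l].
have -> : \sum_(j : {ffun 'I_l -> 'I_n} | increasing j)
        (\prod_(i < l) (tnth x (j i) == tnth w i)%:R) * pattern_weight z j = R x w zs.
  have hx : (size x <= n)%N by rewrite size_tuple.
  rewrite -(@sum_Phi _ x l n w z hx).
  apply: eq_bigr => j _; congr (_ * _); apply: eq_bigr => i _.
  by rewrite /trace_at size_tuple ltn_ord nat_of_bool_eq (tnth_nth false).
rewrite /trace_expect.
rewrite (eq_bigr (fun m => trace_prob q m * (p ^- l * R (trace x m) w [seq (z i - q) / p | i <- enum 'I_l]))); last first.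
  by move=> m _; rewrite (@sum_Phi _ _ l n w _ (@size_trace n x m)).
rewrite -/(trace_expect q x (fun U => p ^- l * R U w [seq (z i - q) / p | i <- enum 'I_l])).
rewrite trace_expectE Ex_scale.
have -> : [seq (z i - q) / p | i <- enum 'I_l] = [seq (z0 - q) / (1 - q) | z0 <- zs].
  by rewrite /zs; elim: (enum 'I_l) => //= i s ->.
rewrite Ex_R //; last by rewrite size_tuple /zs size_map size_enum_ord.
by rewrite size_tuple mulrA mulVf ?mul1r // expf_neq0.
Qed.
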